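(* Let $G$ be a cyclically $4$-edge-connected cubic graph and $E(A,B)=\{e_1,e_2,e_3,e_4\}$ a cyclic $4$-edge-cut of $G$, with $v_i$ the end-vertex of $e_i$ in $A$. Then each of the three graphs $G^A_{(12)}$, $G^A_{(13)}$, $G^A_{(14)}$ is $3$-edge-connected, and in each of them none of the edges $e^A_1,e^A_2,e^A_3,e^A_4$ is contained in a cyclic $3$-edge-cut. Moreover, if $G[A]$ is not a cycle of length four, then at least two of these three graphs are cyclically $4$-edge-connected.
   Context: Graphs may have parallel edges. An edge-cut $E(A,B)$ (edges between parts of a partition of $V(G)$) is a $k$-edge-cut if it has exactly $k$ edges, and cyclic if both $G[A]$ and $G[B]$ contain a cycle; $G$ is cyclically $k$-edge-connected if it has no cyclic edge-cut with fewer than $k$ edges. For a $4$-edge-cut $E(A,B)=\{e_1,\dots,e_4\}$ with $v_i$ the end of $e_i$ in $A$, and $\{i,j,k,\ell\}=\{1,2,3,4\}$: $G^A_{(ij)}$ is the cubic graph obtained from $G[A]$ by adding a new vertex $v_{ij}$ adjacent to $v_i$ and $v_j$, a new vertex $v_{k\ell}$ adjacent to $v_k$ and $v_\ell$, and an edge $e^A_{(ij)}=v_{ij}v_{k\ell}$. For each $m$, $e^A_m$ denotes the edge joining $v_m$ to the new vertex adjacent to it. *)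

(* Defs.v *)
From HB Require Import structures.
From mathcomp Require Import all_boot.
Set Implicit Arguments. Unset Strict Implicit. Unset Printing Implicit Defensive.

(* A finite multigraph: a finite vertex type, a finite edge type, and two
   endpoint maps (the orientation is irrelevant everywhere below). *)
Record mgraph := MGraph {
  vert : finType;
  edge : finType;
  src : edge -> vert;
  tgt : edge -> vert }.

Section Basics.
Variable G : mgraph.

Definition loopless : Prop := forall e : edge G, src e != tgt e.

(* degree; a loop would count twice *)
Definition deg (v : vert G) : nat :=
  #|[set e : edge G | src e == v]| + #|[set e : edge G | tgt e == v]|.

Definition cubic : Prop := forall v : vert G, deg v = 3.

Definition joins (e : edge G) (u w : vert G) : bool :=
  ((src e == u) && (tgt e == w)) || ((src e == w) && (tgt e == u)).

(* a cycle of length k.+1 in G: distinct vertices vs 0, ..., vs k and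
   distinct edges es i joining vs i and vs (i+1 mod k+1) *)
Definition is_cycle k (vs : 'I_k.+1 -> vert G) (es : 'I_k.+1 -> edge G) : Prop :=
  injective vs /\ injective es /\ (forall i, joins (es i) (vs i) (vs (ordS i))).

Definition has_cycle (S : {set vert G}) : Prop :=
  exists k (vs : 'I_k.+1 -> vert G) (es : 'I_k.+1 -> edge G),
    is_cycle vs es /\ (forall i, vs i \in S).

(* G[S] is a cycle of length four: a 4-cycle whose vertex set is exactly S and
   which uses every edge with both ends in S *)
Definition is_C4 (S : {set vert G}) : Prop :=
  exists (vs : 'I_4 -> vert G) (es : 'I_4 -> edge G),
    is_cycle vs es /\ (forall x, x \in S <-> exists i, vs i = x) /\
    (forall f, src f \in S -> tgt f \in S -> exists i, es i = f).

Definition cut (S : {set vert G}) : {set edge G} :=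
  [set e | (src e \in S) != (tgt e \in S)].

Definition cyclic_cut (S : {set vert G}) : Prop :=
  has_cycle S /\ has_cycle (~: S).

Definition cyc_edge_conn (k : nat) : Prop :=
  forall S : {set vert G}, cyclic_cut S -> k <= #|cut S|.

Definition edge_conn (k : nat) : Prop :=
  forall S : {set vert G}, S != set0 -> S != setT -> k <= #|cut S|.

End Basics.

(* The graph G^A_(0 j) (0-indexed: the edges e_0..e_3 of the cut, j in {1,2,3}).
   Vertices: the vertices of A, plus two new vertices: inr true = v_{0j},
   inr false = v_{kl}.  Edges: the edges of G[A]; inr (Some m) = e^A_m,
   joining v_m to the new vertex adjacent to it; inr None = e^A_(0j). *)
Section Construction.
Variables (G : mgraph) (A : {set vert G}).

Definition Avert : finType := {x : vert G | x \in A}.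
Definition Aedge : finType := {f : edge G | (src f \in A) && (tgt f \in A)}.

Lemma Aedge_src (f : Aedge) : src (val f) \in A.
Proof. by case/andP: (valP f). Qed.
Lemma Aedge_tgt (f : Aedge) : tgt (val f) \in A.
Proof. by case/andP: (valP f). Qed.

Variables (v : 'I_4 -> Avert) (j : 'I_4).

Definition side (m : 'I_4) : bool := (m == ord0) || (m == j).

Definition gvert : finType := (Avert + bool)%type.
Definition gedge : finType := (Aedge + option 'I_4)%type.

Definition gsrc (f : gedge) : gvert :=
  match f with
  | inl f => inl (exist _ (src (val f)) (Aedge_src f))
  | inr (Some m) => inl (v m)
  | inr None => inr true
  end.

Definition gtgt (f : gedge) : gvert :=
  match f with
  | inl f => inl (exist _ (tgt (val f)) (Aedge_tgt f))
  | inr (Some m) => inr (side m)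
  | inr None => inr false
  end.

Definition GA : mgraph := MGraph gsrc gtgt.

Definition eA (m : 'I_4) : edge GA := inr (Some m).

End Construction.

(* Main.v *)
From Stdlib Require Import Lia Classical.
Require Import Defs.
From HB Require Import structures.
From mathcomp Require Import all_boot.
Set Implicit Arguments. Unset Strict Implicit. Unset Printing Implicit Defensive.


Lemma card_setE (T : finType) (P : pred T) : #|[set x | P x]| = \sum_x (P x : nat).
Proof.
rewrite -sum1_card big_mkcond /=; apply: eq_bigr => x _; rewrite inE; by case: (P x).
Qed.

Lemma sum_eq1 (T : finType) (A : {set T}) x : \sum_(u in A) ((x == u) : nat) = (x \in A).
Proof.
case: (boolP (x \in A)) => xA.
  rewrite (bigD1 x) //= eqxx big1 // => u /andP[_ ux]; by rewrite eq_sym (negbTE ux).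
by rewrite big1 // => u uA; case: eqP => // xu; rewrite xu uA in xA.
Qed.

Section Gen.
Variable G : mgraph.
Implicit Types T : {set vert G}.

Definition ein T := #|[set f : edge G | (src f \in T) && (tgt f \in T)]|.

Lemma cutC T : cut (~: T) = cut T.
Proof. by apply/setP => f; rewrite !inE; case: (src f \in T); case: (tgt f \in T). Qed.

End Gen.

Section Gen.
Variable G : mgraph.
Implicit Types T : {set vert G}.
Lemma handshake (Hcub : cubic G) T : 3 * #|T| = 2 * ein T + #|cut T|.
Proof.
have -> : 3 * #|T| = \sum_(u in T) deg u.
  by rewrite (eq_bigr (fun _ => 3)) ?sum_nat_const 1?mulnC // => u _; rewrite Hcub.
rewrite /deg; under eq_bigr do rewrite !card_setE.
rewrite big_split /=.
rewrite exchange_big [X in _ + X]exchange_big /=.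
rewrite /ein /cut !card_setE big_distrr /= -big_split -big_split /=.
apply: eq_bigr => f _; rewrite !sum_eq1.
by case: (src f \in T); case: (tgt f \in T).
Qed.
Lemma joins_ends (f : edge G) (u w : vert G) : joins f u w ->
  (src f = u /\ tgt f = w) \/ (src f = w /\ tgt f = u).
Proof. by case/orP => /andP[/eqP -> /eqP ->]; [left|right]. Qed.

Lemma joins_loop (Hl : loopless G) (f : edge G) (u : vert G) : ~~ joins f u u.
Proof.
apply/negP => /joins_ends [[s t]|[s t]]; by move: (Hl f); rewrite s t eqxx.
Qed.

Lemma cyc_card (Hl : loopless G) T : has_cycle T -> 1 < #|T| /\ 1 < ein T.
Proof.
case=> k [vs [es [[vi [ei jn]] inT]]].
have d0 : vs ord0 != vs (ordS ord0).
  by apply/eqP => h; move: (jn ord0); rewrite -h (negbTE (joins_loop Hl _ _)).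
split.
  by apply/card_gt1P; exists (vs ord0), (vs (ordS ord0)); rewrite !inT.
apply/card_gt1P; exists (es ord0), (es (ordS ord0)); rewrite !inE.
have h : forall i, (src (es i) \in T) && (tgt (es i) \in T).
  by move=> i; case/joins_ends: (jn i) => [][-> ->]; rewrite !inT.
rewrite !h; split => //; apply/eqP => /ei e0.
by move: d0; rewrite -e0 eqxx.
Qed.

Lemma ein_le1 (Hl : loopless G) T : #|T| <= 1 -> ein T = 0.
Proof.
move=> /card_le1_eqP h; apply/eqP; rewrite cards_eq0; apply/eqP/setP => f.
rewrite !inE; apply/negP => /andP[s t]; by move: (Hl f); rewrite (h _ _ s t) eqxx.
Qed.

End Gen.

Section Cyc.
Variable G : mgraph.
Hypothesis Hl : loopless G.
Implicit Types T : {set vert G}.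

Definition inc (f : edge G) (u : vert G) := (src f == u) || (tgt f == u).
Definition idg T u := #|[set f : edge G | (src f \in T) && (tgt f \in T) && inc f u]|.

Lemma joins_same (f : edge G) x y x' y' : joins f x y -> joins f x' y' ->
  (x = x' /\ y = y') \/ (x = y' /\ y = x').
Proof.
move=> j1 j2; case/joins_ends: j1 => [][s1 t1]; case/joins_ends: j2 => [][s2 t2];
rewrite -s1 -t1 -s2 -t2; tauto.
Qed.

Lemma path_bound T n (p : nat -> vert G) :
  (forall i, i <= n -> p i \in T) ->
  (forall i i', i <= n -> i' <= n -> p i = p i' -> i = i') -> n < #|T|.
Proof.
move=> hT hinj.
have <- : #|[set p (val i) | i : 'I_n.+1]| = n.+1.
  rewrite card_imset ?card_ord // => i i' /hinj h; apply: val_inj; apply: h;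
  by rewrite -ltnS ltn_ord.
apply: subset_leq_card; apply/subsetP => x /imsetP [i _ ->].
by apply: hT; rewrite -ltnS ltn_ord.
Qed.

Lemma path_cycle T (Hdeg : forall u, u \in T -> 1 < idg T u) :
  forall k n (p : nat -> vert G) (g : nat -> edge G),
  #|T| - n <= k ->
  (forall i, i <= n -> p i \in T) ->
  (forall i i', i <= n -> i' <= n -> p i = p i' -> i = i') ->
  (forall i, i < n -> joins (g i) (p i) (p i.+1)) ->
  has_cycle T.
Proof.
elim=> [|k IH] n p g hk hT hinj hj; have hn := path_bound hT hinj.
  by move: hk; rewrite leqn0 subn_eq0 => hk; rewrite ltnNge hk in hn.
have uT := hT n (leqnn n).
have /card_gt1P [f1 [f2 []]] := Hdeg _ uT.
rewrite !inE => /andP[/andP[f1s f1t] f1u] /andP[/andP[f2s f2t] f2u] f12.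
pose f := if f1 == g n.-1 then f2 else f1.
have fs : src f \in T by rewrite /f; case: ifP.
have ft : tgt f \in T by rewrite /f; case: ifP.
have fu : inc f (p n) by rewrite /f; case: ifP.
have fg : f != g n.-1.
  rewrite /f; case: ifP => [/eqP h|/negbT //]; by rewrite -h eq_sym.
pose w := if src f == p n then tgt f else src f.
have jf : joins f (p n) w.
  rewrite /joins /w; case: eqP => [->|]; first by rewrite !eqxx.
  move=> ns; move: fu; rewrite /inc => /orP [/eqP h|/eqP ->].
    by rewrite h in ns.
  by rewrite !eqxx orbT.
have wT : w \in T by rewrite /w; case: ifP.
have wu : w != p n.
  by apply/eqP => h; move: jf; rewrite h (negbTE (joins_loop Hl _ _)).
case: (boolP [exists i : 'I_n.+1, p i == w]) => [/existsP [i /eqP pi]|nex].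
  have iltn : i < n.
    rewrite ltn_neqAle -ltnS ltn_ord andbT; apply/eqP => h.
    by move: wu; rewrite -pi h eqxx.
  move: (nat_of_ord i) pi iltn => {}i pi iltn.
  have [K Ki] : exists K, i + K = n by exists (n - i); rewrite subnKC // ltnW.
  subst n.
  have ginj : forall a b, a < i + K -> b < i + K -> g a = g b -> a = b.
    move=> a b an bn gab; move: (hj a an); rewrite gab => ja.
    have := joins_same ja (hj b bn).
    move=> [][/hinj h1 /hinj h2].
      by apply: h1; rewrite ltnW.
    have e1 := h1 (ltnW an) bn; have e2 := h2 an (ltnW bn).
    subst; lia.
  have tmax : forall t : 'I_K.+1, (t < K) = false -> val t = K.
    move=> t; rewrite ltnNge => /negbFE h; apply/eqP; rewrite eqn_leq h andbT.
    by rewrite -ltnS ltn_ord.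
  exists K, (fun t : 'I_K.+1 => p (i + t)),
    (fun t : 'I_K.+1 => if t < K then g (i + t) else f).
  split; last by move=> t; apply: hT; rewrite leq_add2l -ltnS ltn_ord.
  split.
    move=> t1 t2 /hinj h; apply: val_inj; apply/eqP.
    by rewrite -(eqn_add2l i) h // leq_add2l -ltnS ltn_ord.
  split.
    have key : forall t : 'I_K.+1, t < K -> g (i + t) = f -> False.
      move=> t tK gf; move: (hj (i + t)); rewrite gf.
      have itn : i + t < i + K by rewrite ltn_add2l.
      move=> /(_ itn) jt; have := joins_same jf jt.
      move=> [][h1 h2].
        move: (hinj _ _ (leqnn (i + K)) (ltnW itn) h1) => /eqP.
        by rewrite eqn_add2l => /eqP h; move: tK; rewrite [X in _ < X]h ltnn.
      have e1 := hinj _ _ (leqnn (i + K)) itn h1.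
      by move: fg; rewrite e1 /= gf eqxx.
    move=> t1 t2; case: ifP => t1K; case: ifP => t2K.
    - move/ginj => h; apply: val_inj; apply/eqP.
      by rewrite -(eqn_add2l i) h // ltn_add2l.
    - by move/(key _ t1K).
    - by move/esym/(key _ t2K).
    - by move=> _; apply: val_inj; rewrite (tmax _ t1K) (tmax _ t2K).
  move=> t; rewrite /ordS /=; case: ifP => tK.
    by rewrite modn_small ?ltnS // addnS; apply: hj; rewrite ltn_add2l.
  by rewrite (tmax _ tK) modnn addn0 pi.
pose p' := fun t => if t == n.+1 then w else p t.
pose g' := fun t => if t == n then f else g t.
have leSn' : forall t, t <= n.+1 -> t <> n.+1 -> t <= n.
  by move=> t h1 h2; rewrite -ltnS ltn_neqAle h1 andbT; apply/eqP.
apply: (IH n.+1 p' g').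
- by rewrite subnS -subn1 leq_subLR add1n.
- move=> t tn; rewrite /p'; case: eqP => // tn1; exact: hT (leSn' _ tn tn1).
- have pw : forall t, t <= n -> p t <> w.
    move=> t tn h; move/existsP: nex; apply; exists (Ordinal (n:=n.+1) (m:=t) tn).
    by rewrite /= h.
  move=> t t' ht ht'; rewrite /p'; case: eqP => [->|tn]; case: eqP => [->|t'n] //.
  + by move=> h; case: (pw _ (leSn' _ ht' t'n)).
  + by move=> h; case: (pw _ (leSn' _ ht tn)).
  + by apply: hinj; apply: leSn'.
- move=> t; rewrite ltnS /g' /p' => tn; case: eqP => [->|tnn].
    by rewrite (ltn_eqF (ltnSn n)) eqxx.
  have tn' : t < n by rewrite ltn_neqAle tn andbT; apply/eqP.
  rewrite ?eqSS ?(ltn_eqF tn') ?(ltn_eqF (tn : t < n.+1)) //; exact: hj.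
Qed.
End Cyc.


Lemma arith1 a b c : 3 * a = 2 * b + c -> b < a -> c <= 3 -> a <= 1.
Proof. move=> h1 /leP h2 /leP h3; apply/leP; rewrite -!multE -!plusE in h1; lia. Qed.

Section Conn.
Variable G : mgraph.
Hypothesis Hl : loopless G.
Implicit Types T : {set vert G}.

Lemma find_cycle T : (forall u, u \in T -> 1 < idg T u) -> T != set0 -> has_cycle T.
Proof.
move=> Hdeg /set0Pn [u uT].
have /card_gt1P [f1 _] := Hdeg _ uT.
apply: (@path_cycle _ Hl T Hdeg #|T| 0 (fun _ => u) (fun _ => f1)).
- by rewrite subn0.
- by [].
- by move=> [|i] [|i'].
- by [].
Qed.

Lemma has_cycle_sub (S T : {set vert G}) : S \subset T -> has_cycle S -> has_cycle T.
Proof.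
move=> sub [k [vs [es [c h]]]]; exists k, vs, es; split => // i.
exact: (subsetP sub _ (h i)).
Qed.

Lemma forest n : forall T, #|T| <= n -> T != set0 -> ~ has_cycle T -> ein T < #|T|.
Proof.
elim: n => [|n IH] T hTn hT0 hc.
  by move: hT0; rewrite -card_gt0 ltnNge hTn.
case: (boolP [forall u in T, 1 < idg T u]) => [/forall_inP all | /forall_inPn [u uT hu]].
  by exfalso; apply: hc; exact: find_cycle.
have e1 : ein T = ein (T :\ u) + idg T u.
  rewrite /ein /idg !card_setE -big_split /=; apply: eq_bigr => f _; rewrite !inE /inc.
  case: (src f =P u) => [->|su]; case: (tgt f =P u) => [->|tu]; rewrite ?eqxx ?uT /=.
  - by [].
  - by case: (tgt f \in T).
  - by case: (src f \in T).
  - by case: (src f \in T); case: (tgt f \in T).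
have cd : #|T| = #|T :\ u|.+1 by rewrite (cardsD1 u T) uT.
case: (boolP (T :\ u == set0)) => [/eqP T0 | T0].
  have cT : #|T| = 1 by rewrite cd T0 cards0.
  by rewrite (ein_le1 Hl) cT.
have := IH (T :\ u).
rewrite T0 -ltnS -cd hTn => /(_ isT isT) h.
have {}h : ein (T :\ u) < #|T :\ u|.
  apply: h => hc'; apply: hc; apply: has_cycle_sub hc'; exact: subD1set.
rewrite e1 cd; rewrite -ltnNge ltnS in hu.
by rewrite ltnS; apply: leq_trans h; rewrite -addn1 leq_add2l.
Qed.

Hypothesis Hcub : cubic G.
Hypothesis Hc4 : cyc_edge_conn G 4.

Lemma cyc_small (S : {set vert G}) : 1 < #|S| -> #|cut S| <= 3 -> has_cycle S.
Proof.
move=> hS hcut; case: (classic (has_cycle S)) => // nc.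
have S0 : S != set0 by rewrite -card_gt0 ltnW.
have := forest (leqnn _) S0 nc => hf.
have := arith1 (handshake Hcub S) hf hcut.
by rewrite leqNgt hS.
Qed.

Lemma conn4 T : 1 < #|T| -> 1 < #|~: T| -> 3 < #|cut T|.
Proof.
move=> h1 h2; case: (leqP 4 #|cut T|) => // hlt; exfalso.
have hlt' : #|cut (~: T)| <= 3 by rewrite cutC.
have := Hc4 (conj (cyc_small h1 hlt) (cyc_small h2 hlt')).
by rewrite leqNgt hlt.
Qed.

Lemma conn3 T : T != set0 -> T != setT -> 2 < #|cut T|.
Proof.
move=> h0 h1.
have c1 : 0 < #|T| by rewrite card_gt0.
have c2 : 0 < #|~: T|.
  by rewrite card_gt0; apply: contra h1 => /eqP h; rewrite -(setCK T) h setC0.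
case: (ltngtP #|T| 1) => [h|hT|hT]; first by rewrite ltnS leqn0 in h; rewrite (eqP h) in c1.
  case: (ltngtP #|~: T| 1) => [h|hC|hC]; first by rewrite ltnS leqn0 in h; rewrite (eqP h) in c2.
    by apply: ltnW; apply: conn4.
  have := handshake Hcub (~: T); rewrite hC (ein_le1 Hl) ?hC // cutC muln1 muln0 add0n => <-.
  by [].
have := handshake Hcub T; rewrite hT (ein_le1 Hl) ?hT // muln1 muln0 add0n => <-.
by [].
Qed.

End Conn.


Definition bn (b : bool) : nat := if b then 1 else 0.

Lemma core (I dS dB nS nC : nat) (s1 s2 s3 b0 b1 b2 b3 x y : bool) :
  (bn s1 + bn s2 + bn s3 = 1)%coq_nat ->
  dS = (I + bn b0 + bn b1 + bn b2 + bn b3)%coq_nat ->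
  dB = (I + bn (~~b0) + bn (~~b1) + bn (~~b2) + bn (~~b3))%coq_nat ->
  (bn b0 + bn b1 + bn b2 + bn b3 <= nS)%coq_nat ->
  (bn (~~b0) + bn (~~b1) + bn (~~b2) + bn (~~b3) <= nC)%coq_nat ->
  ((0 < nS)%coq_nat -> (2 < dS)%coq_nat) ->
  ((1 < nS)%coq_nat -> (3 < dS)%coq_nat) ->
  ((0 < nC)%coq_nat -> (2 < dB)%coq_nat) ->
  ((1 < nC)%coq_nat -> (3 < dB)%coq_nat) ->
  let d := (I + bn (x != y) + bn (b0 != x) + bn (b1 != (if s1 then x else y))
             + bn (b2 != (if s2 then x else y)) + bn (b3 != (if s3 then x else y)))%coq_nat in
  (((0 < nS + bn x + bn y)%coq_nat -> (0 < nC + bn (~~x) + bn (~~y))%coq_nat -> (2 < d)%coq_nat) /\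
   ((1 < nS + bn x + bn y)%coq_nat -> (1 < nC + bn (~~x) + bn (~~y))%coq_nat -> (d <= 3)%coq_nat ->
     [/\ b0 = x, b1 = (if s1 then x else y), b2 = (if s2 then x else y) &
         b3 = (if s3 then x else y)] /\
     ((x = true /\ y = false /\ dS = 4) \/ (x = false /\ y = true /\ dB = 4)))).
Proof.
move=> hs hdS hdB hnS hnC F1 F2 F3 F4 d; rewrite /d; clear d.
rewrite -!plusE in hs hdS hdB hnS hnC F1 F2 F3 F4 *.
have {}F1 : (nS <= 0 \/ 2 < dS)%coq_nat by case: (classic (0 < nS)%coq_nat) => h; [right; auto | left; lia].
have {}F2 : (nS <= 1 \/ 3 < dS)%coq_nat by case: (classic (1 < nS)%coq_nat) => h; [right; auto | left; lia].
have {}F3 : (nC <= 0 \/ 2 < dB)%coq_nat by case: (classic (0 < nC)%coq_nat) => h; [right; auto | left; lia].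
have {}F4 : (nC <= 1 \/ 3 < dB)%coq_nat by case: (classic (1 < nC)%coq_nat) => h; [right; auto | left; lia].
subst dS dB.
move: hs hnS hnC F1 F2 F3 F4; case: s1 s2 s3 => [] [] [] //= _;
case: b0 b1 b2 b3 x y => [] [] [] [] [] [] /=; intros; split; intros;
  first [lia | exfalso; lia | split; [by constructor | first [left; do 2 split => //; lia | right; do 2 split => //; lia]]].
Qed.


Lemma sum_opt (T : finType) (F : option T -> nat) : \sum_o F o = F None + \sum_t F (Some t).
Proof. by rewrite ![index_enum _]unlock [@Finite.enum in LHS]unlock /= big_cons big_map. Qed.


Definition o0 : 'I_4 := @Ordinal 4 0 isT.
Definition o1 : 'I_4 := @Ordinal 4 1 isT.
Definition o2 : 'I_4 := @Ordinal 4 2 isT.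
Definition o3 : 'I_4 := @Ordinal 4 3 isT.

Lemma ord4_cases (m : 'I_4) : [\/ m = o0, m = o1, m = o2 | m = o3].
Proof.
case: m => [[|[|[|[|k]]]] hk]; try by [constructor; apply: val_inj].
Qed.

Lemma sum4 (F : 'I_4 -> nat) : \sum_(m < 4) F m = (F o0 + F o1 + F o2 + F o3)%coq_nat.
Proof.
rewrite !big_ord_recl big_ord0 addn0 !addnA -!plusE.
by congr (_ + _ + _ + _)%coq_nat; congr F; apply: val_inj.
Qed.

Lemma bnE b : bn b = nat_of_bool b.
Proof. by case: b. Qed.

Lemma side0 j : side j o0 = true.
Proof. by []. Qed.

Lemma side_sum j : j != ord0 -> (bn (side j o1) + bn (side j o2) + bn (side j o3) = 1)%coq_nat.
Proof.
case: j => [[|[|[|[|k]]]] hk] //.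
Qed.

Lemma cnt j1 j2 (F : bool -> bool -> bool) : j1 != ord0 -> j2 != ord0 -> j1 != j2 ->
  \sum_(m < 4) (F (side j1 m) (side j2 m) : nat) =
  (F true true + F true false + F false true + F false false)%N.
Proof.
rewrite sum4 -!plusE.
case: j1 => [[|[|[|[|k]]]] h1] //; case: j2 => [[|[|[|[|k']]]] h2] // _ _ _;
 rewrite /side /= -!val_eqE /= ?eqE /= -?plusE; lia.
Qed.

Section Main.
Variable G : mgraph.
Hypotheses (Hloop : loopless G) (Hcub : cubic G) (Hc4 : cyc_edge_conn G 4).
Variable A : {set vert G}.
Hypotheses (HAcyc : cyclic_cut A) (HA4 : #|cut A| = 4).
Variable e : 'I_4 -> edge G.
Hypotheses (Heinj : injective e) (Hecut : forall m, e m \in cut A).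
Variable v : 'I_4 -> Avert A.
Hypothesis Hv : forall m, (val (v m) == src (e m)) || (val (v m) == tgt (e m)).

Implicit Types W : {set vert G}.

Lemma vA m : val (v m) \in A.
Proof. exact: valP. Qed.

Lemma cutA_img : cut A = [set e m | m : 'I_4].
Proof.
apply/eqP; rewrite eq_sym eqEcard; apply/andP; split.
  by apply/subsetP => f /imsetP [m _ ->].
by rewrite card_imset // card_ord HA4.
Qed.

Lemma ecut_gen m (P : pred (vert G)) c : (forall x, x \in A = false -> P x = c) ->
  (e m \in cut [set x | P x]) = (P (val (v m)) != c).
Proof.
move=> hP; have hc := Hecut m; have va := vA m.
rewrite !inE in hc *.
case/orP: (Hv m) => /eqP h; rewrite -h in hc *; rewrite va in hc.
- have tA : tgt (e m) \in A = false by apply/negbTE; move: hc; case: (_ \in A).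
  by rewrite (hP _ tA).
- have tA : src (e m) \in A = false by apply/negbTE; move: hc; case: (_ \in A).
  by rewrite (hP _ tA) eq_sym.
Qed.

Lemma ecut_W W m : W \subset A -> (e m \in cut W) = (val (v m) \in W).
Proof.
move=> sub; have := @ecut_gen m (fun x => x \in W) false.
have -> : [set x | x \in W] = W by apply/setP => x; rewrite inE.
rewrite (_ : forall b, (b != false) = b); last by case.
apply => x xA; apply/negbTE; apply: contraFN xA; exact: (subsetP sub).
Qed.

Lemma ecut_WB W m : W \subset A -> (e m \in cut (W :|: ~: A)) = (val (v m) \notin W).
Proof.
move=> sub; have := @ecut_gen m (fun x => x \in W :|: ~: A) true.
have -> : [set x | x \in W :|: ~: A] = W :|: ~: A by apply/setP => x; rewrite inE.
have h : forall x, x \in A = false -> (x \in W :|: ~: A) = true.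
  by move=> x xA; rewrite !inE xA orbT.
move=> /(_ h) ->.
by rewrite !inE vA orbF; case: (_ \in W).
Qed.

Definition IA W := \sum_(f : edge G) (((src f \in A) && (tgt f \in A)) && (f \in cut W) : nat).
Definition cA W := \sum_(m < 4) (val (v m) \in W : nat).

Lemma sum_cutA (P : pred (edge G)) :
  \sum_(f : edge G) ((f \in cut A) && P f : nat) = \sum_(m < 4) (P (e m) : nat).
Proof.
rewrite (eq_bigr (fun f => if f \in cut A then (P f : nat) else 0)); last first.
  by move=> f _; case: (f \in cut A).
rewrite -big_mkcond cutA_img big_imset /=; last by move=> x y _ _; apply: Heinj.
by apply: eq_bigl => m; rewrite inE.
Qed.

Lemma dW W : W \subset A -> #|cut W| = IA W + cA W.
Proof.
move=> sub.
have -> : cA W = \sum_(f : edge G) ((f \in cut A) && (f \in cut W) : nat).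
  by rewrite sum_cutA; apply: eq_bigr => m _; rewrite ecut_W.
rewrite /IA -big_split /= card_setE; apply: eq_bigr => f _.
move: (subsetP sub (src f)) (subsetP sub (tgt f)); rewrite !inE.
case: (src f \in W); case: (tgt f \in W); case: (src f \in A); case: (tgt f \in A);
  move=> h1 h2 //; by [move: (h1 isT) | move: (h2 isT)].
Qed.

Lemma dWB W : W \subset A ->
  #|cut (W :|: ~: A)| = IA W + \sum_(m < 4) (val (v m) \notin W : nat).
Proof.
move=> sub.
have -> : \sum_(m < 4) (val (v m) \notin W : nat) =
    \sum_(f : edge G) ((f \in cut A) && (f \in cut (W :|: ~: A)) : nat).
  by rewrite sum_cutA; apply: eq_bigr => m _; rewrite ecut_WB.
rewrite /IA -big_split /= card_setE; apply: eq_bigr => f _.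
move: (subsetP sub (src f)) (subsetP sub (tgt f)); rewrite !inE.
case: (src f \in W); case: (tgt f \in W); case: (src f \in A); case: (tgt f \in A);
  move=> h1 h2 //; by [move: (h1 isT) | move: (h2 isT)].
Qed.

Lemma sum_notin W : \sum_(m < 4) (val (v m) \notin W : nat) + cA W = 4.
Proof.
rewrite /cA -big_split /= (eq_bigr (fun _ => 1)); last by move=> m _; case: (_ \in W).
by rewrite sum_nat_const card_ord.
Qed.

Lemma setC_AD W : ~: (A :\: W) = W :|: ~: A.
Proof. by apply/setP => x; rewrite !inE negb_and negbK. Qed.

Lemma Lrel W : W \subset A -> #|cut (A :\: W)| + 2 * cA W = #|cut W| + 4.
Proof.
move=> sub; rewrite -cutC setC_AD dWB // dW //.
move: (sum_notin W) => h; rewrite -!plusE -!multE in h *; lia.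
Qed.

Lemma submod (X Y : {set vert G}) :
  #|cut (X :&: Y)| + #|cut (X :|: Y)| <= #|cut X| + #|cut Y|.
Proof.
rewrite /cut !card_setE -!big_split /=; apply: leq_sum => f _; rewrite !inE.
by case: (src f \in X); case: (src f \in Y); case: (tgt f \in X); case: (tgt f \in Y).
Qed.

Lemma Ac_card : 1 < #|~: A|.
Proof. exact: (cyc_card Hloop HAcyc.2).1. Qed.

Lemma A_card : 2 < #|A|.
Proof.
have [_ h] := cyc_card Hloop HAcyc.1.
have := handshake Hcub A; rewrite HA4 => hh.
move/leP: h => h; apply/ltP; rewrite -!plusE -!multE in hh; lia.
Qed.

Lemma vinj : injective v.
Proof.
move=> i k hik; case: (i =P k) => // nik; exfalso.
pose W := [set val (v i)].
have sub : W \subset A by rewrite sub1set vA.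
have c2 : 1 < cA W.
  rewrite /cA (bigD1 i) //= (bigD1 k) /=; last by apply/eqP => h; apply: nik.
  by rewrite !inE eqxx hik eqxx.
have cW : #|W| = 1 by rewrite cards1.
have d3 : #|cut W| = 3.
  by have := handshake Hcub W; rewrite cW (ein_le1 Hloop) ?cW // muln1 muln0 add0n.
have := Lrel sub; rewrite d3 => hL.
have hA := A_card; have hC := Ac_card.
have h1 : 1 < #|A :\: W|.
  by move: hA; rewrite (cardsD1 (val (v i)) A) vA add1n ltnS.
have h2 : 1 < #|~: (A :\: W)|.
  rewrite setC_AD; apply: leq_trans hC _; apply: subset_leq_card; exact: subsetUr.
have := conn4 Hloop Hcub Hc4 h1 h2.
move/leP: c2 => c2; move=> /leP h; rewrite -!plusE -!multE in hL; lia.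
Qed.

Lemma cA_le W : cA W <= #|W|.
Proof.
rewrite /cA -card_setE.
rewrite -(card_in_imset (f := fun m => val (v m))); last first.
  by move=> x y _ _ /val_inj /vinj.
apply: subset_leq_card; apply/subsetP => x /imsetP [m]; rewrite inE => h ->.
exact: h.
Qed.

Section GAj.
Variable j : 'I_4.
Implicit Types S : {set vert (GA v j)}.

Definition SA S : {set vert G} :=
  [set x | if (insub x : option (Avert A)) is Some a then inl a \in S else false].

Lemma SA_val S a : (val a \in SA S) = (inl a \in S).
Proof. by rewrite inE valK. Qed.

Lemma SA_sub S : SA S \subset A.
Proof. by apply/subsetP => x; rewrite inE; case: insubP. Qed.

Lemma SA_exist S x (px : x \in A) : (inl (exist _ x px) \in S) = (x \in SA S).
Proof. by rewrite -SA_val. Qed.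

Lemma sum_Aedge (F : edge G -> nat) :
  \sum_(f : Aedge A) F (val f) = \sum_(f | (src f \in A) && (tgt f \in A)) F f.
Proof.
pose P := [pred f : edge G | (src f \in A) && (tgt f \in A)].
have h := @big_sub_cond _ 0 addn _ P xpredT F.
rewrite (eq_bigl (fun i => (i \in P) && xpredT i)); last by move=> f; rewrite andbT.
by rewrite h.
Qed.

Lemma IA_E W : IA W = \sum_(f : Aedge A) (val f \in cut W : nat).
Proof.
rewrite (sum_Aedge (fun f => (f \in cut W : nat))) /IA [RHS]big_mkcond /=.
by apply: eq_bigr => f _; case: ifP.
Qed.

Lemma dGA S : #|cut S| = IA (SA S) + ((inr true \in S) != (inr false \in S))
   + \sum_(m < 4) ((val (v m) \in SA S) != (inr (side j m) \in S)).
Proof.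
rewrite /cut card_setE big_sumType /= sum_opt /= IA_E -addnA.
congr (_ + (_ + _)).
- by apply: eq_bigr => f _ /=; rewrite [X in _ = nat_of_bool X]inE !SA_exist.
- by under [RHS]eq_bigr do rewrite SA_val.
Qed.

Lemma cardS S : #|S| = #|SA S| + (inr true \in S) + (inr false \in S).
Proof.
rewrite -!sum1_card !big_mkcond /= big_sumType /= big_bool /= addnA; congr (_ + _ + _).
rewrite (_ : \sum_i (if inl i \in S then 1 else 0) =
             \sum_(x in A) (if x \in SA S then 1 else 0)); last first.
  rewrite [RHS]big_sub; apply: eq_bigr => a _; by rewrite SA_val.
rewrite [RHS]big_mkcond /= [LHS]big_mkcond /=; apply: eq_bigr => x _.
case: ifP => // xA; case: ifP => // xS.
by rewrite (subsetP (SA_sub S) x xS) in xA.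
Qed.

Lemma SA_C S : SA (~: S) = A :\: SA S.
Proof.
apply/setP => x; rewrite !inE; case: insubP => [a xA <-|/negPf ->] //.
by rewrite inE (valP a) andbT.
Qed.

Lemma Ac_ex : exists x, x \in ~: A.
Proof. by apply/set0Pn; rewrite -card_gt0 ltnW // Ac_card. Qed.

Lemma notinA_sum W : W \subset A ->
  \sum_(m < 4) (val (v m) \notin W : nat) = cA (A :\: W).
Proof. by move=> _; apply: eq_bigr => m _; rewrite !inE vA andbT. Qed.

Lemma GA_analysis (hj : j != ord0) S :
  ((0 < #|S| -> 0 < #|~: S| -> 2 < #|cut S|) /\
   (1 < #|S| -> 1 < #|~: S| -> #|cut S| <= 3 ->
     (forall m, (val (v m) \in SA S) = (inr (side j m) \in S)) /\
     exists P : {set vert G}, [/\ P \subset A, forall m, (val (v m) \in P) = side j m & #|cut P| = 4])).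
Proof.
set T := SA S.
have sub : T \subset A := SA_sub S.
have E1 := dGA S; have E2 := dW sub; have E3 := dWB sub.
have E4 := cA_le T; have E4' := cA_le (A :\: T); rewrite -notinA_sum // in E4'.
have E5 := cardS S; have E6 := cardS (~: S); rewrite SA_C in E6.
have [x0 x0C] := Ac_ex.
have TnT : T != setT.
  apply/eqP => h; move: (subsetP sub x0); rewrite h inE => /(_ isT).
  by rewrite inE in x0C; rewrite (negbTE x0C).
have U0 : T :|: ~: A != set0 by apply/set0Pn; exists x0; rewrite inE x0C orbT.
have UT : ~: (T :|: ~: A) = A :\: T by rewrite -setC_AD setCK.
have F1 : (0 < #|T|)%coq_nat -> (2 < #|cut T|)%coq_nat.
  move/ltP => h; apply/ltP; apply: conn3 => //; by rewrite -card_gt0.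
have F2 : (1 < #|T|)%coq_nat -> (3 < #|cut T|)%coq_nat.
  move/ltP => h; apply/ltP; apply: conn4 => //.
  apply: leq_trans Ac_card _; apply: subset_leq_card; by rewrite setCS.
have F3 : (0 < #|A :\: T|)%coq_nat -> (2 < #|cut (T :|: ~: A)|)%coq_nat.
  move/ltP => h; apply/ltP; apply: conn3 => //.
  apply/eqP => h'; move: h; rewrite -UT h' setCT cards0 //.
have F4 : (1 < #|A :\: T|)%coq_nat -> (3 < #|cut (T :|: ~: A)|)%coq_nat.
  move/ltP => h; apply/ltP; apply: conn4 => //; last by rewrite UT.
  apply: leq_trans Ac_card _; apply: subset_leq_card; exact: subsetUr.
rewrite /cA !sum4 -!bnE in E2 E3 E4 E4'.
rewrite E1 !sum4 -!bnE -/T.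
have hside : forall b, (inr b \in S) = if b then inr true \in S else inr false \in S.
  by case.
rewrite !(hside (side j _)) side0.
rewrite !inE in E6.
rewrite -/T in E5 E6.
have E2' : #|cut T| = (IA T + bn (val (v o0) \in T) + bn (val (v o1) \in T)
    + bn (val (v o2) \in T) + bn (val (v o3) \in T))%coq_nat by rewrite E2 -!plusE; lia.
have E3' : #|cut (T :|: ~: A)| = (IA T + bn (~~ (val (v o0) \in T)) + bn (~~ (val (v o1) \in T))
    + bn (~~ (val (v o2) \in T)) + bn (~~ (val (v o3) \in T)))%coq_nat by rewrite E3 -!plusE; lia.
move/leP: E4 => E4; move/leP: E4' => E4'.
have C := core (inr true \in S) (inr false \in S) (side_sum hj) E2' E3' E4 E4' F1 F2 F3 F4.
move: C; rewrite /=; move=> [C1 C2].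
split.
  move=> h1 h2.
  have h1' : (0 < #|T| + bn (inr true \in S) + bn (inr false \in S))%coq_nat.
    by move: h1; rewrite E5 -!bnE => /ltP h; rewrite -!plusE in h *; exact: h.
  have h2' : (0 < #|A :\: T| + bn (~~ (inr true \in S)) + bn (~~ (inr false \in S)))%coq_nat.
    by move: h2; rewrite E6 -!bnE => /ltP h; rewrite -!plusE in h *; exact: h.
  rewrite !plusE !addnA; apply/ltP; exact: (C1 h1' h2').
move=> h1 h2 h3.
have h1' : (1 < #|T| + bn (inr true \in S) + bn (inr false \in S))%coq_nat.
  by move: h1; rewrite E5 -!bnE => /ltP h; rewrite -!plusE in h *; exact: h.
have h2' : (1 < #|A :\: T| + bn (~~ (inr true \in S)) + bn (~~ (inr false \in S)))%coq_nat.
  by move: h2; rewrite E6 -!bnE => /ltP h; rewrite -!plusE in h *; exact: h.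
move: h3; rewrite !plusE !addnA => /leP h3.
have [[e0 e1 e2 e3] hc] := C2 h1' h2' h3.
have hm : forall m, (val (v m) \in T) = (if side j m then inr true \in S else inr false \in S).
  by move=> m; case: (ord4_cases m) => ->.
have hm' : forall m, (sval (v m) \in T) = (if side j m then inr true \in S else inr false \in S) := hm.
split; first by move=> m; rewrite hside (hm m).
case: hc => [[xt [yf dT]]|[xf [yt dT]]].
  exists T; split => // m; move: (hm m); rewrite xt yf; case: (side j m) => h; exact: h.
exists (A :\: T); split => //.
- exact: subsetDl.
- by move=> m; rewrite in_setD vA andbT hm' xf yt; case: (side j m).
- by rewrite -cutC setC_AD.
Qed.

End GAj.

Lemma sub_neqT W : W \subset A -> W != setT.
Proof.
move=> sub; have [x0 x0C] := Ac_ex; apply/eqP => h.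
move: (subsetP sub x0); rewrite h inE => /(_ isT); by rewrite inE in x0C; rewrite (negbTE x0C).
Qed.

Lemma small_piece W : W \subset A -> 0 < cA W -> #|cut W| <= 3 -> #|cut W| = 3 /\ #|W| <= 1.
Proof.
move=> sub c0 d3.
have W0 : W != set0 by rewrite -card_gt0; apply: leq_trans c0 (cA_le W).
have := conn3 Hloop Hcub Hc4 W0 (sub_neqT sub) => h3.
split; first by apply/eqP; rewrite eqn_leq d3 h3.
rewrite leqNgt; apply/negP => h2.
have h2' : 1 < #|~: W|.
  apply: leq_trans Ac_card _; apply: subset_leq_card; by rewrite setCS.
by have := conn4 Hloop Hcub Hc4 h2 h2'; rewrite ltnNge d3.
Qed.

Lemma lower W : W \subset A -> 0 < cA W -> 2 < #|cut W|.
Proof.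
move=> sub c0; apply: conn3 => //; last exact: sub_neqT.
by rewrite -card_gt0; apply: leq_trans c0 (cA_le W).
Qed.

Lemma quad j1 j2 (X Y : {set vert G}) : j1 != ord0 -> j2 != ord0 -> j1 != j2 ->
  X \subset A -> Y \subset A ->
  (forall m, (val (v m) \in X) = side j1 m) -> (forall m, (val (v m) \in Y) = side j2 m) ->
  #|cut X| = 4 -> #|cut Y| = 4 -> #|A| <= 4.
Proof.
move=> n1 n2 n12 sX sY mX mY dX dY.
have mX' : forall m, (sval (v m) \in X) = side j1 m := mX.
have mY' : forall m, (sval (v m) \in Y) = side j2 m := mY.
have cnt' := fun F => @cnt j1 j2 F n1 n2 n12.
have sW1 : X :&: Y \subset A by apply: subset_trans (subsetIl X Y) sX.
have sW2 : X :&: (A :\: Y) \subset A by apply: subset_trans (subsetIl _ _) sX.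
have sW3 : A :\: (X :|: (A :\: Y)) \subset A by apply: subsetDl.
have sW4 : A :\: (X :|: Y) \subset A by apply: subsetDl.
have sY' : A :\: Y \subset A by apply: subsetDl.
have c1 : cA (X :&: Y) = 1.
  rewrite /cA (eq_bigr (fun m => ((fun a b => a && b) (side j1 m) (side j2 m) : nat))).
    exact: (cnt' (fun a b => a && b)).
  by move=> m _; rewrite in_setI mX' mY'.
have c2 : cA (X :&: (A :\: Y)) = 1.
  rewrite /cA (eq_bigr (fun m => ((fun a b => a && ~~ b) (side j1 m) (side j2 m) : nat))).
    exact: (cnt' (fun a b => a && ~~ b)).
  by move=> m _; rewrite in_setI in_setD mX' mY' vA andbT.
have c3 : cA (A :\: (X :|: (A :\: Y))) = 1.
  rewrite /cA (eq_bigr (fun m => ((fun a b => ~~ (a || ~~ b)) (side j1 m) (side j2 m) : nat))).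
    exact: (cnt' (fun a b => ~~ (a || ~~ b))).
  by move=> m _; rewrite !inE mX' mY' vA !andbT.
have c4 : cA (A :\: (X :|: Y)) = 1.
  rewrite /cA (eq_bigr (fun m => ((fun a b => ~~ (a || b)) (side j1 m) (side j2 m) : nat))).
    exact: (cnt' (fun a b => ~~ (a || b))).
  by move=> m _; rewrite in_setD in_setU mX' mY' vA andbT.
have cY : cA Y = 2.
  rewrite /cA (eq_bigr (fun m => ((fun a b => b) (side j1 m) (side j2 m) : nat))).
    exact: (cnt' (fun a b => b)).
  by move=> m _; rewrite mY'.
have L1 := Lrel sW4; have L2 := Lrel sW3; have LY := Lrel sY.
have e4 : A :\: (A :\: (X :|: Y)) = X :|: Y.
  apply/setP => x; move: (subsetP sX x) (subsetP sY x); rewrite !inE.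
  case: (x \in X); case: (x \in Y); case: (x \in A) => h1 h2 //; by [move: (h1 isT) | move: (h2 isT)].
have e3 : A :\: (A :\: (X :|: (A :\: Y))) = X :|: (A :\: Y).
  apply/setP => x; move: (subsetP sX x) (subsetP sY x); rewrite !inE.
  case: (x \in X); case: (x \in Y); case: (x \in A) => h1 h2 //; by [move: (h1 isT) | move: (h2 isT)].
rewrite e4 c4 in L1; rewrite e3 c3 in L2; rewrite cY dY in LY.
have S1 := submod X Y; have S2 := submod X (A :\: Y).
rewrite dX dY in S1.
have dY' : #|cut (A :\: Y)| = 4.
  by move: LY; rewrite -!plusE -!multE; lia.
rewrite dX dY' in S2.
have g1 := lower sW1 (ltac:(by rewrite c1)).
have g2 := lower sW2 (ltac:(by rewrite c2)).
have g3 := lower sW3 (ltac:(by rewrite c3)).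
have g4 := lower sW4 (ltac:(by rewrite c4)).
move: S1 S2 L1 L2 g1 g2 g3 g4; rewrite -!plusE -!multE.
move=> /leP S1 /leP S2 L1 L2 /ltP g1 /ltP g2 /ltP g3 /ltP g4.
have [_ z1] := small_piece sW1 (ltac:(by rewrite c1)) (ltac:(apply/leP; lia)).
have [_ z2] := small_piece sW2 (ltac:(by rewrite c2)) (ltac:(apply/leP; lia)).
have [_ z3] := small_piece sW3 (ltac:(by rewrite c3)) (ltac:(apply/leP; lia)).
have [_ z4] := small_piece sW4 (ltac:(by rewrite c4)) (ltac:(apply/leP; lia)).
have k1 := cardsID Y X.
have k2 := cardsID Y (A :\: X).
have k3 := cardsID X A.
have e5 : X :\: Y = X :&: (A :\: Y).
  apply/setP => x; move: (subsetP sX x) (subsetP sY x); rewrite !inE.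
  case: (x \in X); case: (x \in Y); case: (x \in A) => h1 h2 //; by [move: (h1 isT) | move: (h2 isT)].
have e6 : (A :\: X) :&: Y = A :\: (X :|: (A :\: Y)).
  apply/setP => x; move: (subsetP sX x) (subsetP sY x); rewrite !inE.
  case: (x \in X); case: (x \in Y); case: (x \in A) => h1 h2 //; by [move: (h1 isT) | move: (h2 isT)].
have e7 : (A :\: X) :\: Y = A :\: (X :|: Y).
  apply/setP => x; move: (subsetP sX x) (subsetP sY x); rewrite !inE.
  case: (x \in X); case: (x \in Y); case: (x \in A) => h1 h2 //; by [move: (h1 isT) | move: (h2 isT)].
have e8 : A :&: X = X.
  apply/setP => x; move: (subsetP sX x); rewrite !inE.
  by case: (x \in X); case: (x \in A) => // /(_ isT).
rewrite e5 in k1; rewrite e6 e7 in k2; rewrite e8 in k3.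
move: z1 z2 z3 z4 k1 k2 k3; rewrite -!plusE => /leP z1 /leP z2 /leP z3 /leP z4 k1 k2 k3.
apply/leP; lia.
Qed.

Lemma C4_small : #|A| <= 4 -> is_C4 A.
Proof.
move=> hA.
case: HAcyc => [[k [vs [es [[vi [ei jn]] inA]]]] _].
pose T := [set vs i | i : 'I_k.+1].
have cT : #|T| = k.+1 by rewrite card_imset // card_ord.
have sT : T \subset A by apply/subsetP => x /imsetP [i _ ->].
have hcT : has_cycle T.
  exists k, vs, es; split => //; by move=> i; apply: imset_f.
have [gT _] := cyc_card Hloop hcT.
have inT : forall i, (src (es i) \in T) && (tgt (es i) \in T).
  move=> i; case/joins_ends: (jn i) => [][-> ->]; by rewrite !imset_f.
have eT : k.+1 <= ein T.
  rewrite -(card_ord k.+1) -(card_imset _ ei).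
  by apply: subset_leq_card; apply/subsetP => f /imsetP [i _ ->]; rewrite inE inT.
have hs := handshake Hcub T.
have k3 : 3 < k.+1.
  rewrite ltnNge; apply/negP => hk.
  have h2 : 1 < #|~: T|.
    apply: leq_trans Ac_card _; apply: subset_leq_card; by rewrite setCS.
  have := conn4 Hloop Hcub Hc4 gT h2.
  move: hs eT hk; rewrite cT -!plusE -!multE => hs /leP eT /leP hk /leP h; lia.
have TA : T = A.
  apply/eqP; rewrite eqEcard sT cT /=; apply: leq_trans hA k3.
have kk : k = 3.
  apply/eqP; rewrite eqn_leq -ltnS -cT TA hA /=; by [].
subst k.
have eA4 : ein A = 4.
  have := handshake Hcub A; rewrite HA4 -TA cT -!plusE -!multE; lia.
have IE : [set f : edge G | (src f \in A) && (tgt f \in A)] = [set es i | i : 'I_4].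
  apply/eqP; rewrite eq_sym eqEcard; apply/andP; split.
    by apply/subsetP => f /imsetP [i _ ->]; rewrite inE -TA inT.
  by rewrite card_imset // card_ord -eA4.
exists vs, es; split => //; split.
  move=> x; rewrite -TA; split; first by case/imsetP => i _ ->; exists i.
  by case=> i <-; apply: imset_f.
move=> f fs ft.
have : f \in [set f : edge G | (src f \in A) && (tgt f \in A)] by rewrite inE fs ft.
by rewrite IE => /imsetP [i _ ->]; exists i.
Qed.

Lemma GA_loopless j : loopless (GA v j).
Proof.
case=> [f|[m|]] //=.
apply/negP => /eqP h.
have := congr1 (fun x : gvert A => if x is inl a then val a else src (val f)) h => /= h'.
by move: (Hloop (val f)); rewrite h' eqxx.
Qed.

Lemma main_all :
  (forall j : 'I_4, j != ord0 ->
     edge_conn (GA v j) 3 /\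
     (forall (m : 'I_4) (S : {set vert (GA v j)}),
        cyclic_cut S -> #|cut S| = 3 -> eA v j m \notin cut S)) /\
  (~ is_C4 A ->
     exists j1 j2 : 'I_4, [/\ j1 != ord0, j2 != ord0, j1 != j2,
        cyc_edge_conn (GA v j1) 4 & cyc_edge_conn (GA v j2) 4]).
Proof.
split.
  move=> j hj; split.
    move=> S S0 ST; apply: (GA_analysis hj S).1; first by rewrite card_gt0.
    rewrite card_gt0; apply: contra ST => /eqP h; by rewrite -(setCK S) h setC0.
  move=> m S [cS cC] d3.
  have [h1 _] := cyc_card (@GA_loopless j) cS.
  have [h2 _] := cyc_card (@GA_loopless j) cC.
  have [hb _] := (GA_analysis hj S).2 h1 h2 (ltac:(by rewrite d3)).
  by rewrite inE /= -SA_val hb eqxx.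
move=> nC4.
have bad : forall j, j != ord0 -> ~ cyc_edge_conn (GA v j) 4 ->
    exists P : {set vert G}, [/\ P \subset A, forall m, (val (v m) \in P) = side j m & #|cut P| = 4].
  move=> j hj hn; have [S] := not_all_ex_not _ (fun S : {set vert (GA v j)} => cyclic_cut S -> 4 <= #|cut S|) hn.
  move=> hS0; have [[cS cC] hS] := imply_to_and _ _ hS0.
  have [h1 _] := cyc_card (@GA_loopless j) cS.
  have [h2 _] := cyc_card (@GA_loopless j) cC.
  have h3 : #|cut S| <= 3 by rewrite leqNgt; apply/negP.
  exact: ((GA_analysis hj S).2 h1 h2 h3).2.
have two : forall j1 j2, j1 != ord0 -> j2 != ord0 -> j1 != j2 ->
    ~ cyc_edge_conn (GA v j1) 4 -> ~ cyc_edge_conn (GA v j2) 4 -> False.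
  move=> j1 j2 n1 n2 n12 b1 b2.
  have [X [sX mX dX]] := bad _ n1 b1.
  have [Y [sY mY dY]] := bad _ n2 b2.
  exact: nC4 (C4_small (quad n1 n2 n12 sX sY mX mY dX dY)).
case: (classic (cyc_edge_conn (GA v o1) 4)) => c1;
case: (classic (cyc_edge_conn (GA v o2) 4)) => c2;
case: (classic (cyc_edge_conn (GA v o3) 4)) => c3.
- by exists o1, o2.
- by exists o1, o2.
- by exists o1, o3.
- by exfalso; apply: (two o2 o3).
- by exists o2, o3.
- by exfalso; apply: (two o1 o3).
- by exfalso; apply: (two o1 o2).
- by exfalso; apply: (two o1 o2).
Qed.

End Main.


Theorem mainTheorem11 (G : mgraph)
  (Hloop : loopless G) (Hcub : cubic G) (Hc4 : cyc_edge_conn G 4)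
  (A : {set vert G}) (HAcyc : cyclic_cut A) (HA4 : #|cut A| = 4)
  (e : 'I_4 -> edge G) (Heinj : injective e) (Hecut : forall m, e m \in cut A)
  (v : 'I_4 -> Avert A)
  (Hv : forall m, (val (v m) == src (e m)) || (val (v m) == tgt (e m))) :
  (forall j : 'I_4, j != ord0 ->
     edge_conn (GA v j) 3 /\
     (forall (m : 'I_4) (S : {set vert (GA v j)}),
        cyclic_cut S -> #|cut S| = 3 -> eA v j m \notin cut S)) /\
  (~ is_C4 A ->
     exists j1 j2 : 'I_4, [/\ j1 != ord0, j2 != ord0, j1 != j2,
        cyc_edge_conn (GA v j1) 4 & cyc_edge_conn (GA v j2) 4]).
Proof.
exact: (main_all Hloop Hcub Hc4 HAcyc HA4 Heinj Hecut Hv).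
Qed.
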